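(* Let $\Delta\in\{0,1,-1\}^{m\times m}$, regarded as a matrix over $\mathbb Q$, be a connection matrix with column/row partition $J_0,\dots,J_b$ which is totally unimodular. Let $\Delta^m$ be the last matrix produced by the Incremental Sweeping Algorithm applied to $\Delta$. Then for every position $(i,j)$ marked as a primary pivot, $\Delta^m_{ij}\in\{1,-1\}$.
   Context: A matrix is totally unimodular (TU) if every square submatrix has determinant in $\{0,1,-1\}$. $U^{pq}$ is the $m\times m$ matrix whose only nonzero entry is a $1$ in position $(p,q)$. Superscripts on matrices are indices, not powers. A connection matrix (over a field $\mathbb F$, here $\mathbb Q$) is a matrix $\Delta\in\mathbb F^{m\times m}$ together with a partition $\{1,\dots,m\}=J_0\sqcup\cdots\sqcup J_b$ (the column/row partition; the $J_k$ need not consist of consecutive integers) such that $\Delta$ is upper triangular, $\Delta\Delta=0$, and $\Delta_{ij}=0$ unless $i<j$ and $(i,j)\in\bigcup_{k=1}^bJ_{k-1}\times J_k$. For $1\le r\le m-1$ the $r$-th diagonal is $\{(j-r,j):r<j\le m\}$. Incremental Sweeping Algorithm (ISA) applied to a connection matrix $\Delta$: set $\Delta^0=\Delta^1=\Delta$. For $r=1,\dots,m-1$ in turn: (Markup) for every position $(j-r,j)$ on the $r$-th diagonal with $\Delta^r_{j-r,j}\ne0$ such that no position in column $j$ was marked as a primary pivot at an earlier iteration: if some position $(j-r,p)$ of row $j-r$ was marked as a primary pivot at an earlier iteration, mark $(j-r,j)$ as a change-of-basis pivot of iteration $r$; otherwise mark $(j-r,j)$ permanently as a primary pivot. (Update)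 Let $T^r=I-\sum \frac{\Delta^r_{j-r,j}}{\Delta^r_{j-r,p}}U^{pj}$, the sum running over all change-of-basis pivots $(j-r,j)$ of iteration $r$, where $(j-r,p)$ is the primary pivot position in row $j-r$; set $\Delta^{r+1}=(T^r)^{-1}\Delta^rT^r$. *)

(* Defs.v *)
From HB Require Import structures.
From mathcomp Require Import all_boot all_order all_algebra.
Set Implicit Arguments. Unset Strict Implicit. Unset Printing Implicit Defensive.
Import Order.TTheory GRing.Theory Num.Theory.
Local Open Scope ring_scope.

(* Indices are 0-based: 'I_m = {0,...,m-1}. *)

Definition totally_unimodular (m : nat) (A : 'M[rat]_m) : Prop :=
  forall (k : nat) (f g : 'I_k -> 'I_m),
    (forall a b : 'I_k, (a < b)%N -> (f a < f b)%N) ->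
    (forall a b : 'I_k, (a < b)%N -> (g a < g b)%N) ->
    \det (\matrix_(a, b) A (f a) (g b)) \in [:: 0; 1; -1].

(* Connection matrix with partition J_0,...,J_b given by the block map
   d : 'I_m -> 'I_(b+1), i.e. i \in J_(d i). *)
Definition connection_matrix (m b : nat) (d : 'I_m -> 'I_b.+1)
  (D : 'M[rat]_m) : Prop :=
  [/\ (forall i j : 'I_m, (j < i)%N -> D i j = 0),
      D *m D = 0 &
      (forall i j : 'I_m, D i j != 0 ->
         (i < j)%N /\ nat_of_ord (d j) = (nat_of_ord (d i)).+1)].

(* State of the ISA before iteration r: the matrix Delta^r and the set of
   positions marked (so far) as primary pivots. *)
Definition isa_stateT (m : nat) := ('M[rat]_m * {set 'I_m * 'I_m})%type.

Section ISA.
Variable m : nat.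
Implicit Types (D : 'M[rat]_m) (P : {set 'I_m * 'I_m}) (r : nat).

Definition col_has_pivot P (j : 'I_m) : bool := [exists i, (i, j) \in P].
Definition row_has_pivot P (i : 'I_m) : bool := [exists p, (i, p) \in P].

Definition markable D P r (ij : 'I_m * 'I_m) : bool :=
  [&& (ij.1 + r)%N == ij.2, D ij.1 ij.2 != 0 & ~~ col_has_pivot P ij.2].

Definition new_primary D P r : {set 'I_m * 'I_m} :=
  [set ij | markable D P r ij && ~~ row_has_pivot P ij.1].

Definition change_of_basis D P r (ij : 'I_m * 'I_m) : bool :=
  markable D P r ij && row_has_pivot P ij.1.

(* the summand (Delta_{j-r,j} / Delta_{j-r,p}) U^{pj}, p the primary pivot
   column of row j-r *)
Definition cob_term D P (ij : 'I_m * 'I_m) : 'M[rat]_m :=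
  match [pick p | (ij.1, p) \in P] with
  | Some p => (D ij.1 ij.2 / D ij.1 p) *: delta_mx p ij.2
  | None => 0
  end.

Definition isa_T D P r : 'M[rat]_m :=
  1%:M - \sum_(ij : 'I_m * 'I_m | change_of_basis D P r ij) cob_term D P ij.

Definition isa_step r (s : isa_stateT m) : isa_stateT m :=
  let D := s.1 in let P := s.2 in
  (invmx (isa_T D P r) *m D *m isa_T D P r, P :|: new_primary D P r).

(* isa_state D0 n = state before iteration n+1, i.e. (Delta^{n+1}, pivots
   marked in iterations 1..n). *)
Fixpoint isa_state (D0 : 'M[rat]_m) (n : nat) : isa_stateT m :=
  match n with
  | 0 => (D0, set0)
  | n'.+1 => isa_step n (isa_state D0 n')
  end.

Definition isa_final (D0 : 'M[rat]_m) : 'M[rat]_m := (isa_state D0 m.-1).1.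
Definition isa_primary (D0 : 'M[rat]_m) : {set 'I_m * 'I_m} :=
  (isa_state D0 m.-1).2.

End ISA.

(* Main.v *)
Require Import Defs.
From HB Require Import structures.
From mathcomp Require Import all_boot all_order all_algebra.
From mathcomp Require Import fingroup perm.
Import Order.TTheory GRing.Theory Num.Theory.
Local Open Scope ring_scope.
Set Implicit Arguments. Unset Strict Implicit.

Definition inS (x : rat) := x \in [:: 0; 1; -1].

Lemma inS_N x : inS x -> inS (- x).
Proof.
rewrite /inS !inE => /or3P [] /eqP ->; by rewrite ?oppr0 ?opprK eqxx ?orbT.
Qed.

Lemma inS_sign (b : bool) x : inS x -> inS ((-1) ^+ b * x).
Proof. by case: b => /= h; rewrite ?expr1 ?expr0 ?mulN1r ?mul1r //; apply: inS_N. Qed.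

Lemma sort_perm k m (h : 'I_k -> 'I_m) : injective h ->
  exists s : 'S_k, forall a b : 'I_k, (a < b)%N -> (h (s a) < h (s b))%N.
Proof.
move=> hinj.
pose rk (x : 'I_k) := #|[set y | (h y < h x)%N]|.
have rk_mono : forall x y, (h x < h y)%N -> (rk x < rk y)%N.
  move=> x y hxy; apply: proper_card; apply/properP; split.
    by apply/subsetP => z; rewrite !inE => hz; exact: ltn_trans hz hxy.
  by exists x; rewrite !inE // ltnn.
have rk_lt : forall x, (rk x < k)%N.
  move=> x; rewrite -[k in (_ < k)%N]card_ord; apply: proper_card.
  apply/properP; split; first exact: subset_predT.
  by exists x; rewrite ?inE // ltnn.
pose r (x : 'I_k) := Ordinal (rk_lt x).
have rinj : injective r.
  move=> x y /(congr1 val) /= exy.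
  case: (ltngtP (h x) (h y)) => [/rk_mono|/rk_mono|/val_inj/hinj //];
    by rewrite exy ltnn.
exists (perm rinj)^-1%g => a b hab.
set x := (perm rinj)^-1%g a; set y := (perm rinj)^-1%g b.
have ex : r x = a by rewrite /x -[r _]permE permKV.
have ey : r y = b by rewrite /y -[r _]permE permKV.
case: (ltngtP (h x) (h y)) => // [/rk_mono|/val_inj/hinj exy].
  have ex' : rk x = a by rewrite -ex.
  have ey' : rk y = b by rewrite -ey.
  by rewrite ex' ey' => hba; move: (ltn_trans hab hba); rewrite ltnn.
by move: hab; rewrite -ex -ey exy ltnn.
Qed.

Definition utri {n} (A : 'M[rat]_n) := forall a b : 'I_n, (b < a)%N -> A a b = 0.
Definition upuni {n} (A : 'M[rat]_n) := utri A /\ forall a, A a a = 1.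

Lemma det_utri n (A : 'M[rat]_n) : utri A -> \det A = \prod_i A i i.
Proof.
move=> hA; rewrite -det_tr det_trig.
  by apply: eq_bigr => i _; rewrite mxE.
by apply/is_trig_mxP => i j hij; rewrite mxE hA.
Qed.

Lemma det_upuni n (A : 'M[rat]_n) : upuni A -> \det A = 1.
Proof. by case=> h1 h2; rewrite det_utri // big1. Qed.

Lemma upuni_mul n (A B : 'M[rat]_n) : upuni A -> upuni B -> upuni (A *m B).
Proof.
case=> hA1 hA2 [hB1 hB2]; split.
  move=> a b hba; rewrite mxE big1 // => c _.
  case: (ltnP c a) => hca; first by rewrite hA1 ?mul0r.
  by rewrite hB1 ?mulr0 // (leq_trans hba hca).
move=> a; rewrite mxE (bigD1 a) //= hA2 hB2 mulr1 big1 ?addr0 // => c hc.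
case: (ltngtP c a) => hca; first by rewrite hA1 ?mul0r.
  by rewrite hB1 ?mulr0.
by move: hc; rewrite (val_inj hca) eqxx.
Qed.

Lemma inc_inj k m (g : 'I_k -> 'I_m) :
  (forall a b : 'I_k, (a < b)%N -> (g a < g b)%N) -> injective g.
Proof.
move=> hg a b eab; apply: val_inj.
case: (ltngtP a b) => // [/hg|/hg]; by rewrite eab ltnn.
Qed.

Lemma det_row_perm k (s : 'S_k) (X : 'M[rat]_k) :
  \det (row_perm s X) = (-1) ^+ s * \det X.
Proof. by rewrite row_permE det_mulmx det_perm. Qed.

Lemma det_col_perm k (s : 'S_k) (X : 'M[rat]_k) :
  \det (col_perm s X) = (-1) ^+ s * \det X.
Proof. by rewrite col_permE det_mulmx det_perm odd_permV mulrC. Qed.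

Lemma TU_rows m (A : 'M[rat]_m) k (f g : 'I_k -> 'I_m) :
  totally_unimodular A -> injective f ->
  (forall a b : 'I_k, (a < b)%N -> (g a < g b)%N) ->
  inS (\det (\matrix_(a, b) A (f a) (g b))).
Proof.
move=> hTU finj hg.
have [s hs] := sort_perm finj.
have := hTU k (fun a => f (s a)) g hs hg.
have -> : \matrix_(a, b) A (f (s a)) (g b) = row_perm s (\matrix_(a, b) A (f a) (g b)).
  by apply/matrixP => a b; rewrite !mxE.
rewrite det_row_perm => h.
have := inS_sign (odd_perm s) h.
by rewrite mulrA -expr2 sqrr_sign mul1r.
Qed.

Section Step.
Variable m : nat.
Variable D : 'M[rat]_m.

Record Inv (r : nat) (M : 'M[rat]_m) (P : {set 'I_m * 'I_m}) : Prop := {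
  inv_S : exists S S', [/\ upuni S, upuni S' & D = S *m M *m S'];
  inv_diag : forall a c, (a, c) \in P -> (a < c)%N /\ (c < a + r)%N;
  inv_row : forall a c c', (a, c) \in P -> (a, c') \in P -> c = c';
  inv_col : forall a a' c, (a, c) \in P -> (a', c) \in P -> a = a';
  inv_nz : forall a c, (a, c) \in P -> M a c != 0;
  inv_low : forall a c b : 'I_m, (a, c) \in P -> (a < b)%N -> M b c = 0;
  inv_proc : forall c b : 'I_m, ~~ col_has_pivot P c -> (c < b + r)%N -> M b c = 0
}.

Section OneStep.
Variables (r : nat) (M : 'M[rat]_m) (P : {set 'I_m * 'I_m}).
Hypothesis r0 : (0 < r)%N.
Hypothesis I : Inv r M P.

Notation cob := (change_of_basis M P r).
Definition NN := \sum_(ij | cob ij) cob_term M P ij.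

Lemma cob_diag i c : cob (i, c) -> (i + r)%N = c.
Proof. by case/andP => /and3P [/eqP]. Qed.
Lemma cob_nz i c : cob (i, c) -> M i c != 0.
Proof. by case/andP => /and3P []. Qed.
Lemma cob_nocol i c : cob (i, c) -> ~~ col_has_pivot P c.
Proof. by case/andP => /and3P []. Qed.
Lemma cob_row i c : cob (i, c) -> exists p, (i, p) \in P.
Proof. by case/andP => _ /existsP. Qed.
Lemma cob_ucol i i' c : cob (i, c) -> cob (i', c) -> i = i'.
Proof.
move=> /cob_diag h /cob_diag h'; apply: val_inj; apply/eqP.
by rewrite -(eqn_add2r r) h h'.
Qed.
Lemma cob_urow i c c' : cob (i, c) -> cob (i, c') -> c = c'.
Proof. by move=> /cob_diag h /cob_diag h'; apply: ord_inj; rewrite -h -h'. Qed.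

Lemma Ncol c :
  ((forall i, ~~ cob (i, c)) /\ (forall b, NN b c = 0)) \/
  exists i p, [/\ cob (i, c), (i, p) \in P &
     forall b, NN b c = (b == p)%:R * (M i c / M i p)].
Proof.
case: (boolP [exists i, cob (i, c)]) => [/existsP [i hi] | hn].
  have [p hp] := cob_row hi.
  right; exists i, p; split => // b.
  rewrite /NN summxE (bigD1 (i, c)) //= big1 ?addr0.
    rewrite /cob_term /=; case: pickP => [p' hp' | /(_ p) /=]; last by rewrite hp.
    rewrite (inv_row I hp' hp).
    by rewrite !mxE eqxx andbT mulrC.
  move=> [i' c'] /andP [hc hne]; rewrite /cob_term.
  case: pickP => [p' _|_]; last by rewrite mxE.
  rewrite !mxE /=; case: (eqVneq c c') => [ec|]; last by rewrite andbF mulr0.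
  subst c'; move: hne; rewrite (cob_ucol hc hi) eqxx //.
left; split.
  by move=> i; apply/negP => hi; case/negP: hn; apply/existsP; exists i.
move=> b; rewrite /NN summxE big1 // => [[i' c']] hc; rewrite /cob_term.
case: pickP => [p' _|_]; rewrite !mxE //=.
case: (eqVneq c c') => [ec|]; last by rewrite andbF mulr0.
by subst c'; case/negP: hn; apply/existsP; exists i'.
Qed.

Lemma mulN_col0 (X : 'M[rat]_m) a c : (forall i, ~~ cob (i, c)) -> (X *m NN) a c = 0.
Proof.
move=> hn; rewrite mxE big1 // => b _.
case: (Ncol c) => [[_ h]|[i [p [hc _ _]]]]; first by rewrite h mulr0.
by have := hn i; rewrite hc.
Qed.

Lemma mulN_col (X : 'M[rat]_m) a c i p : cob (i, c) -> (i, p) \in P ->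
  (X *m NN) a c = X a p * (M i c / M i p).
Proof.
move=> hc hp; rewrite mxE.
case: (Ncol c) => [[hn _]|[i' [p' [hc' hp' hN]]]]; first by have := hn i; rewrite hc.
have ei := cob_ucol hc' hc; subst i'.
have ep := inv_row I hp' hp; subst p'.
rewrite (bigD1 p) //= hN eqxx mul1r big1 ?addr0 // => b hb.
by rewrite hN (negbTE hb) mul0r mulr0.
Qed.

Lemma mulN_row0 (Q : 'M[rat]_m) a c :
  (forall i c0, cob (i, c0) -> (i, a) \in P -> False) -> (NN *m Q) a c = 0.
Proof.
move=> hn; rewrite mxE big1 // => b _.
case: (Ncol b) => [[_ h]|[i [p [hc hp hN]]]]; first by rewrite h mul0r.
rewrite hN; case: eqP => [ea|] /=; last by rewrite !mul0r.
by subst p; case: (hn i b hc hp).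
Qed.

Lemma mulN_row (Q : 'M[rat]_m) a c i c0 : cob (i, c0) -> (i, a) \in P ->
  (NN *m Q) a c = (M i c0 / M i a) * Q c0 c.
Proof.
move=> hc hp; rewrite mxE (bigD1 c0) //= big1 ?addr0.
  case: (Ncol c0) => [[hn _]|[i' [p [hc' hp' hN]]]]; first by have := hn i; rewrite hc.
  have ei := cob_ucol hc' hc; subst i'.
  have ep := inv_row I hp' hp; subst p.
  by rewrite hN eqxx mul1r.
move=> b hb.
case: (Ncol b) => [[_ h]|[i' [p [hc' hp' hN]]]]; first by rewrite h mul0r.
rewrite hN; case: eqP => [ea|] /=; last by rewrite !mul0r.
subst p; have ei := inv_col I hp' hp; subst i'.
by move: hb; rewrite (cob_urow hc' hc) eqxx.
Qed.

Lemma NN2 : NN *m NN = 0.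
Proof.
apply/matrixP => a c; rewrite [RHS]mxE.
case: (Ncol c) => [[hn _]|[i [p [hc hp _]]]]; first by rewrite mulN_col0.
rewrite (mulN_col _ _ hc hp).
case: (Ncol p) => [[_ h]|[i' [p' [hc' _ _]]]]; first by rewrite h mul0r.
have := cob_nocol hc'; case/negP; apply/existsP; by exists i.
Qed.

Lemma NN_ut (a c : 'I_m) : (c <= a)%N -> NN a c = 0.
Proof.
move=> hca.
case: (Ncol c) => [[_ h]|[i [p [hc hp hN]]]]; first by rewrite h.
rewrite hN; case: eqP => [ea|] /=; last by rewrite !mul0r.
subst p; have [_ h2] := inv_diag I hp.
by move: (leq_ltn_trans hca h2); rewrite (cob_diag hc) ltnn.
Qed.

Lemma upuni_1N (e : bool) : upuni (1%:M + (-1) ^+ e *: NN).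
Proof.
split.
  move=> a b hba.
  have nab : (a == b) = false by apply/eqP => eab; move: hba; rewrite eab ltnn.
  by rewrite !mxE NN_ut ?(ltnW hba) // mulr0 addr0 nab mulr0n.
by move=> a; rewrite !mxE NN_ut // mulr0 addr0 eqxx mulr1n.
Qed.

Lemma inv1N : (1%:M - NN) *m (1%:M + NN) = 1%:M.
Proof. by rewrite mulmxBl mul1mx mulmxDr mulmx1 NN2 addr0 addrK. Qed.
Lemma inv1N' : (1%:M + NN) *m (1%:M - NN) = 1%:M.
Proof. by rewrite mulmxDl mul1mx mulmxBr mulmx1 NN2 subr0 subrK. Qed.

Lemma invT : invmx (isa_T M P r) = 1%:M + NN.
Proof.
have ET : isa_T M P r = 1%:M - NN by [].
rewrite ET; have [u _] := mulmx1_unit inv1N.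
by rewrite -[RHS](mulKmx u) inv1N mulmx1.
Qed.

Definition P' := P :|: new_primary M P r.
Definition Q := M *m (1%:M - NN).
Definition M' := (1%:M + NN) *m M *m (1%:M - NN).

Lemma M'E (a c : 'I_m) : M' a c = Q a c + (NN *m Q) a c.
Proof. by rewrite /M' -mulmxA mulmxDl mul1mx mxE. Qed.

Lemma QE (b c : 'I_m) : Q b c = M b c - (M *m NN) b c.
Proof. by rewrite /Q mulmxBr mulmx1 mxE [X in _ + X]mxE. Qed.

Lemma nocob a c : (a, c) \in P' -> forall i, ~~ cob (i, c).
Proof.
move=> h i; apply/negP => hc.
case/setUP: h => [hP|].
  by case/negP: (cob_nocol hc); apply/existsP; exists a.
rewrite inE /= => /andP [/and3P [/eqP ha _ _] hr].
have ea : i = a by apply: ord_inj; apply/eqP; rewrite -(eqn_add2r r) ha (cob_diag hc).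
by subst i; case/negP: hr; case/andP: hc.
Qed.

Lemma Zcol a c (b : 'I_m) : (a, c) \in P' -> (a < b)%N -> M b c = 0.
Proof.
case/setUP => [hP hab|]; first exact: (inv_low I hP hab).
rewrite inE /= => /andP [/and3P [/eqP ha _ hcol] _] hab.
by apply: (inv_proc I hcol); rewrite -ha ltn_add2r.
Qed.

Lemma M'col a c (x : 'I_m) : (a, c) \in P' -> (a <= x)%N -> M' x c = M x c.
Proof.
move=> h hax; rewrite M'E QE mulN_col0 ?subr0; last exact: nocob h.
case: (boolP [exists i, [exists c0, cob (i, c0) && ((i, x) \in P)]]) => [|hn].
  case/existsP => i /existsP [c0 /andP [hc hp]].
  rewrite (mulN_row _ _ hc hp) QE mulN_col0; last exact: nocob h.
  rewrite subr0 (@Zcol _ _ c0 h) ?mulr0 ?addr0 //.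
  have [_ hx] := inv_diag I hp; rewrite -(cob_diag hc).
  exact: leq_ltn_trans hax hx.
rewrite mulN_row0 ?addr0 // => i c0 hc hp; case/negP: hn.
by apply/existsP; exists i; apply/existsP; exists c0; rewrite hc hp.
Qed.

Lemma Qzero (c b : 'I_m) : ~~ col_has_pivot P' c -> (c < b + r.+1)%N -> Q b c = 0.
Proof.
move=> hnc hcb.
have hnc0 : ~~ col_has_pivot P c.
  apply: contra hnc => /existsP [a ha]; apply/existsP; exists a; by rewrite !inE ha.
have hnew : forall a, (a, c) \notin new_primary M P r.
  move=> a; apply: contra hnc => ha; apply/existsP; exists a; by rewrite inE ha orbT.
rewrite QE.
case: (Ncol c) => [[hn _]|[i [p [hc hp _]]]].
  rewrite mulN_col0 // subr0.
  case: (ltnP c (b + r)) => hcb'; first exact: (inv_proc I hnc0 hcb').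
  have ec : (b + r)%N = c.
    by apply/eqP; rewrite eqn_leq hcb' /=; rewrite addnS ltnS in hcb.
  case: (eqVneq (M b c) 0) => // hnz.
  have hm : markable M P r (b, c) by rewrite /markable /= ec eqxx hnz hnc0.
  case: (boolP (row_has_pivot P b)) => hr.
    by have := hn b; rewrite /change_of_basis hm hr.
  by have := hnew b; rewrite inE hm hr.
rewrite (mulN_col _ _ hc hp).
case: (eqVneq b i) => [->|hbi].
  by rewrite mulrCA divff ?mulr1 ?subrr // (inv_nz I hp).
have hib : (i < b)%N.
  have : (i <= b)%N.
    by rewrite -(leq_add2r r) (cob_diag hc) -ltnS -addnS.
  rewrite leq_eqVlt => /orP [/eqP eib|//].
  by rewrite (val_inj eib) eqxx in hbi.
rewrite (inv_low I hp hib) mul0r subr0.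
by apply: (inv_proc I (cob_nocol hc)); rewrite -(cob_diag hc) ltn_add2r.
Qed.

Lemma M'proc (c b : 'I_m) : ~~ col_has_pivot P' c -> (c < b + r.+1)%N -> M' b c = 0.
Proof.
move=> hnc hcb; rewrite M'E (Qzero hnc hcb) add0r.
case: (boolP [exists i, [exists c0, cob (i, c0) && ((i, b) \in P)]]) => [|hn].
  case/existsP => i /existsP [c0 /andP [hc hp]].
  rewrite (mulN_row _ _ hc hp) (Qzero hnc) ?mulr0 //.
  have [_ hx] := inv_diag I hp.
  by apply: (leq_trans hcb); rewrite leq_add2r -(cob_diag hc) ltnW.
rewrite mulN_row0 // => i c0 hc hp; case/negP: hn.
by apply/existsP; exists i; apply/existsP; exists c0; rewrite hc hp.
Qed.

Lemma Mback : M = (1%:M - NN) *m M' *m (1%:M + NN).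
Proof. by rewrite /M' !mulmxA inv1N mul1mx -mulmxA inv1N mulmx1. Qed.

Lemma inv_step : Inv r.+1 M' P'.
Proof.
constructor.
- have [S [S' [hS hS' hD]]] := inv_S I.
  exists (S *m (1%:M - NN)), ((1%:M + NN) *m S'); split.
  + apply: upuni_mul hS _; have := upuni_1N true; by rewrite expr1 scaleN1r.
  + apply: upuni_mul _ hS'; have := upuni_1N false; by rewrite expr0 scale1r.
  + by rewrite hD {1}Mback !mulmxA.
- move=> a c; case/setUP => [hP|].
    have [h1 h2] := inv_diag I hP; split => //.
    by rewrite addnS ltnS ltnW.
  rewrite inE /= => /andP [/and3P [/eqP ha _ _] _]; split; rewrite -ha.
    by rewrite -{1}[a : nat]addn0 ltn_add2l.
  by rewrite addnS ltnSn.
- move=> a c c'; case/setUP => [h1|h1]; case/setUP => [h2|h2].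
  + exact (inv_row I h1 h2).
  + by move: h2; rewrite inE => /andP [_ /negP []]; apply/existsP; exists c.
  + by move: h1; rewrite inE => /andP [_ /negP []]; apply/existsP; exists c'.
  + move: h1 h2; rewrite !inE /= => /andP [/and3P [/eqP h1 _ _] _] /andP [/and3P [/eqP h2 _ _] _].
    by apply: ord_inj; rewrite -h1 -h2.
- move=> a a' c; case/setUP => [h1|h1]; case/setUP => [h2|h2].
  + exact (inv_col I h1 h2).
  + move: h2; rewrite inE /= => /andP [/and3P [_ _ hn] _]; case/negP: hn; apply/existsP; by exists a.
  + move: h1; rewrite inE /= => /andP [/and3P [_ _ hn] _]; case/negP: hn; apply/existsP; by exists a'.
  + move: h1 h2; rewrite !inE /= => /andP [/and3P [/eqP h1 _ _] _] /andP [/and3P [/eqP h2 _ _] _].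
    by apply: ord_inj; apply/eqP; rewrite -(eqn_add2r r) h1 h2.
- move=> a c h; rewrite (M'col h (leqnn a)).
  case/setUP: h => [hP|]; first exact (inv_nz I hP).
  by rewrite inE /= => /andP [/and3P [_ hnz _] _].
- move=> a c b h hab; rewrite (M'col h (ltnW hab)); exact: Zcol h hab.
- move=> c b hnc hcb; exact: M'proc hnc hcb.
Qed.

Lemma step_eq : isa_step r (M, P) = (M', P').
Proof. by rewrite /isa_step /= invT. Qed.

End OneStep.

Lemma upuni1 : upuni (1%:M : 'M[rat]_m).
Proof.
split.
  move=> a b hba.
  have nab : (a == b) = false by apply/eqP => eab; move: hba; rewrite eab ltnn.
  by rewrite mxE nab mulr0n.
by move=> a; rewrite mxE eqxx mulr1n.
Qed.

Lemma inv_base b (d : 'I_m -> 'I_b.+1) : connection_matrix d D -> Inv 1 D set0.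
Proof.
case=> h1 _ h3; constructor.
- by exists 1%:M, 1%:M; split; [exact: upuni1 | exact: upuni1 | rewrite mul1mx mulmx1].
- by move=> a c; rewrite inE.
- by move=> a c c'; rewrite inE.
- by move=> a a' c; rewrite inE.
- by move=> a c; rewrite inE.
- by move=> a c b'; rewrite inE.
- move=> c b' _ hcb; rewrite addn1 ltnS in hcb.
  move: hcb; rewrite leq_eqVlt => /orP [/eqP e | hlt]; last exact: h1.
  have ce := val_inj e; subst c.
  case: (eqVneq (D b' b') 0) => // /h3 [].
  by rewrite ltnn.
Qed.

Lemma inv_all b (d : 'I_m -> 'I_b.+1) : connection_matrix d D ->
  forall n, Inv n.+1 (isa_state D n).1 (isa_state D n).2.
Proof.
move=> hc; elim=> [|n IH]; first exact: inv_base hc.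
have -> : isa_state D n.+1 = isa_step n.+1 (isa_state D n) by [].
case: (isa_state D n) IH => M P IH.
by rewrite step_eq //; exact: inv_step.
Qed.
End Step.

Section Final.
Variable m : nat.
Variables (D M : 'M[rat]_m) (P : {set 'I_m * 'I_m}).
Hypothesis IM : Inv D m M P.
Hypothesis hTU : totally_unimodular D.

Definition rho (c : 'I_m) : 'I_m := if [pick a | (a, c) \in P] is Some a then a else c.

Lemma rhoP a c : (a, c) \in P -> rho c = a.
Proof.
move=> h; rewrite /rho; case: pickP => [a' h' | /(_ a)]; last by rewrite h.
exact (inv_col IM h' h).
Qed.

Definition Cset (lo hi : nat) : {set 'I_m} :=
  [set c | [exists a, [&& (a, c) \in P, (lo <= a)%N & (c <= hi)%N]]].

Lemma CsetP lo hi c : reflect (exists a, [/\ (a, c) \in P, (lo <= a)%N & (c <= hi)%N])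
  (c \in Cset lo hi).
Proof.
rewrite inE; apply: (iffP existsP) => [[a /and3P [h1 h2 h3]]|[a [h1 h2 h3]]];
  exists a; [by split | by rewrite h1 h2 h3].
Qed.

Lemma prodC lo hi : inS (\prod_(c in Cset lo hi) M (rho c) c).
Proof.
set C := Cset lo hi.
have [S [S' [hS hS' hD]]] := inv_S IM.
pose g0 (v : 'I_#|C|) : 'I_m := enum_val v.
have g0inj : injective g0 by move=> x y; exact: enum_val_inj.
have [t ht] := sort_perm g0inj.
pose g v := g0 (t v).
have ginc : forall a b : 'I_#|C|, (a < b)%N -> (g a < g b)%N := ht.
have ginj := inc_inj ginc.
have gC v : g v \in C by exact: enum_valP.
have imC : [set g x | x in [set: 'I_#|C|]] = C.
  apply/eqP; rewrite eqEcard card_imset // cardsT card_ord leqnn andbT.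
  by apply/subsetP => c /imsetP [x _ ->]; exact: gC.
pose f v := rho (g v).
have fP v : exists a, [/\ (a, g v) \in P, (lo <= a)%N, (g v <= hi)%N & f v = a].
  have /CsetP [a [h1 h2 h3]] := gC v; exists a; split => //; exact: rhoP h1.
have finj : injective f.
  move=> u v efu; have [a [h1 _ _ ea]] := fP u; have [a' [h1' _ _ ea']] := fP v.
  have eaa : a = a' by rewrite -ea -ea' efu.
  rewrite -eaa in h1'; apply: ginj; exact (inv_row IM h1 h1').
pose Y := \matrix_(u, v) (S *m M) (f u) (g v).
pose Z := \matrix_(u, v) S' (g u) (g v).
pose X := \matrix_(u, v) D (f u) (g v).
have YE u v : Y u v = (S *m M) (f u) (g v) by rewrite /Y mxE.
have ZE u v : Z u v = S' (g u) (g v) by rewrite /Z mxE.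
have XE u v : X u v = D (f u) (g v) by rewrite /X mxE.
have SMz u c : (c \notin C) -> (c <= hi)%N -> (S *m M) (f u) c = 0.
  move=> hc hch; rewrite mxE big1 // => a _.
  have [a0 [h1 h2 h3 ea]] := fP u.
  case: (ltnP a (f u)) => hau; first by rewrite (proj1 hS) ?mul0r.
  case: (boolP (col_has_pivot P c)) => [/existsP [a1 ha1]|hnp].
    case: (ltnP a1 a) => ha1a; first by rewrite (inv_low IM ha1 ha1a) mulr0.
    case/negP: hc; apply/CsetP; exists a1; split => //.
    by rewrite (leq_trans h2) // (leq_trans _ ha1a) // -ea.
  rewrite (inv_proc IM hnp) ?mulr0 //.
  by rewrite (leq_trans (ltn_ord c)) // leq_addl.
have XYZ : X = Y *m Z.
  apply/matrixP => u w.
  rewrite XE hD [LHS]mxE [RHS]mxE.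
  under [RHS]eq_bigr => v _ do rewrite YE ZE.
  rewrite (bigID (fun c => c \in C)) /= [X in _ + X]big1 ?addr0; last first.
    move=> c hc; case: (ltnP (g w) c) => hcw; first by rewrite (proj1 hS') ?mulr0.
    have [a [_ _ h3 _]] := fP w.
    by rewrite SMz ?mul0r // (leq_trans hcw h3).
  rewrite -[in LHS]imC big_imset /=; last by move=> x y _ _; exact: ginj.
  by apply: eq_bigl => x; rewrite inE.
have detZ : \det Z = 1.
  apply: det_upuni; split.
    by move=> a b hba; rewrite ZE (proj1 hS') //; exact: ginc.
  by move=> a; rewrite ZE (proj2 hS').
have Yz u v : (f v < f u)%N -> Y u v = 0.
  move=> hvu; rewrite YE mxE big1 // => a _.
  case: (ltnP a (f u)) => hau; first by rewrite (proj1 hS) ?mul0r.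
  have [a0 [h1 _ _ ea]] := fP v.
  by rewrite (inv_low IM h1) ?mulr0 // -ea (leq_trans hvu hau).
have Yd u : Y u u = M (f u) (g u).
  rewrite YE mxE (bigD1 (f u)) //= (proj2 hS) mul1r big1 ?addr0 // => a ha.
  case: (ltngtP a (f u)) => hau; first by rewrite (proj1 hS) ?mul0r.
    have [a0 [h1 _ _ ea]] := fP u.
    by rewrite (inv_low IM h1) ?mulr0 // -ea.
  by move: ha; rewrite (val_inj hau) eqxx.
have detY : \det Y = \prod_u M (f u) (g u).
  have [s hs] := sort_perm finj.
  have <- : \det (row_perm s (col_perm s Y)) = \det Y.
    by rewrite det_row_perm det_col_perm mulrA -expr2 sqrr_sign mul1r.
  rewrite det_utri.
    rewrite [RHS](reindex_inj (@perm_inj _ s)) /=.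
    by apply: eq_bigr => i _; rewrite mxE mxE Yd.
  by move=> a b hba; rewrite mxE mxE Yz //; exact: hs.
have detX : inS (\det X) by exact: TU_rows.
rewrite -imC big_imset /=; last by move=> x y _ _; exact: ginj.
have <- : \det X = \prod_(x in [set: 'I_#|C|]) M (rho (g x)) (g x).
  rewrite XYZ det_mulmx detZ mulr1 detY.
  by apply: eq_bigl => x; rewrite inE.
exact: detX.
Qed.

End Final.

Lemma pivot_pm m (D M : 'M[rat]_m) (P : {set 'I_m * 'I_m}) :
  Inv D m M P -> totally_unimodular D ->
  forall i j, (i, j) \in P -> M i j = 1 \/ M i j = -1.
Proof.
move=> IM hTU i j hij.
have [hlt _] := inv_diag IM hij.
have j0 : (0 < j)%N by exact: leq_ltn_trans (leq0n i) hlt.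
have h1 := prodC IM hTU i j.
have h2 := prodC IM hTU i.+1 j.-1.
have hjC : j \in Cset P i j by apply/CsetP; exists i; split.
rewrite (bigD1 j) //= (rhoP IM hij) in h1.
have E : \prod_(c in Cset P i j | c != j) M (rho P c) c =
         \prod_(c in Cset P i.+1 j.-1) M (rho P c) c.
  apply: eq_bigl => c; apply/andP/CsetP.
    move=> [/CsetP [a [h1' h2' h3']] hcj]; exists a; split => //.
      rewrite ltn_neqAle h2' andbT; apply/eqP => eia.
      have eia' := val_inj eia; subst a.
      by move: hcj; rewrite (inv_row IM h1' hij) eqxx.
    rewrite -ltnS prednK // ltn_neqAle h3' andbT.
    by move: hcj; apply: contra => /eqP e; apply/eqP; apply: val_inj.
  move=> [a [h1' h2' h3']]; split.
    by apply/CsetP; exists a; split => //; [exact: ltnW | exact: leq_trans h3' (leq_pred j)].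
  apply/eqP => ecj; move: h3'; rewrite ecj => h3'.
  have hj1 : (j.-1 < j)%N by rewrite ltn_predL.
  have := leq_ltn_trans h3' hj1.
  by rewrite ltnNge leqnn.
rewrite E in h1.
have hnz : \prod_(c in Cset P i.+1 j.-1) M (rho P c) c != 0.
  apply/prodf_neq0 => c /CsetP [a [ha _ _]].
  by rewrite (rhoP IM ha); exact: (inv_nz IM ha).
have hMij : M i j != 0 := inv_nz IM hij.
move: h1 h2 hnz; set p := \prod_(c in _) _ => h1 h2 hnz.
rewrite /inS !inE in h1 h2.
case/or3P: h2 => /eqP hp; rewrite hp in h1 hnz.
- by rewrite eqxx in hnz.
- rewrite mulr1 in h1; case/or3P: h1 => /eqP h; [by rewrite h eqxx in hMij | by left | by right].
- rewrite mulrN1 in h1; case/or3P: h1 => /eqP h.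
  + by move: hMij; rewrite -oppr_eq0 h eqxx.
  + by right; rewrite -[M i j]opprK h.
  + by left; rewrite -[M i j]opprK h opprK.
Qed.

Unset Implicit Arguments.

Theorem mainTheorem9 (m b : nat) (d : 'I_m -> 'I_b.+1) (D : 'M[rat]_m) :
  (forall i j : 'I_m, D i j \in [:: 0; 1; -1]) ->
  connection_matrix d D ->
  totally_unimodular D ->
  forall i j : 'I_m, (i, j) \in isa_primary D ->
    isa_final D i j = 1 \/ isa_final D i j = -1.
Proof.
move=> _ hcm hTU i j.
case: m d D hcm hTU i j => [|m'] d D hcm hTU i j; first by case: i.
rewrite /isa_primary /isa_final /= => hij.
have IM := inv_all hcm m'.
exact: (pivot_pm IM hTU hij).
Qed.
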